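(* Fix a context-free grammar $G=(N,\Sigma,P,S)$. Let $M=(V,E,L)$ be a finite directed edge-labeled graph with $L\subseteq\Sigma$, $E\subseteq V\times L\times V$, and no two parallel edges with the same label, and let $V_s,V_f\subseteq V$ be sets of start and final vertices. Then the worst-case space complexity of the GLL-based graph parsing algorithm (described in the context) run on $G$ and $M$ is $O(|V|^3+|E|)$, the constants depending only on $G$.
   Context: Paths and queries: a path in $M$ is a sequence of edges $(v_0,l_0,v_1),(v_1,l_1,v_2),\dots,(v_{n-1},l_{n-1},v_n)$ with $n\ge 1$; its word is $l_0l_1\cdots l_{n-1}$. The algorithm builds a representation of all paths $p$ from a vertex of $V_s$ to a vertex of $V_f$ whose word belongs to $\mathcal{L}(G)$. The GLL-based graph parsing algorithm: it is the table-driven generalized LL (GLL) parsing algorithm in which input positions are vertices of $M$ instead of indices into a string. A grammar slot is a production with a dot, $X\to\alpha\cdot\beta$. The algorithm maintains a graph-structured stack (GSS) whose nodes are labeled by pairs (grammar slot, vertex); descriptors $(L,u,i,w)$ with $L$ a grammar slot, $u$ a GSS node, $i\in V$ the current position and $w$ an SPPF node (or a dummy); a working set $R$ of descriptors to process, a set $U$ of all descriptors ever created (a descriptor is added to $R$ only if it is not already in $U$), and a set $P$ of popped (GSS node, SPPF node) pairs. Initially $R$ contains one initial descriptor for each vertex in $V_s$. Processing a descriptor at slot $X\to\alpha\cdot x\beta$ at vertex $i$: if $x$ is a terminal, then for every outgoing edge $e$ of $i$ with label $x$, the terminal SPPF node for $e$ is created/reused, combined with the current SPPF node, and a descriptor with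 slot $X\to\alpha x\cdot\beta$ and position the target of $e$ is added; if $x$ is a nonterminal, a GSS node for $(X\to\alpha x\cdot\beta, i)$ is created/reused (with an edge to the current GSS node labeled by the current SPPF node), and for every slot in the union, over outgoing edges $e$ of $i$, of the LL parse-table entries for $x$ and the label of $e$, a descriptor at position $i$ is added; at a slot $X\to\alpha\cdot$ the standard GLL pop operation is performed. All other operations (add, pop, create, SPPF node construction) are those of standard GLL. The algorithm terminates when $R$ is empty. The output is a binarized Shared Packed Parse Forest (SPPF) with terminal nodes $(v_0,T,v_1)$ for edges $(v_0,T,v_1)\in E$, $\varepsilon$-nodes $(v,\varepsilon,v)$, nonterminal nodes $(v_0,A,v_1)$, intermediate nodes $(v_0,t,v_1)$ with $t$ a grammar slot, and packed nodes $(A\to\alpha\cdot\beta,v)$ (children of nonterminal/intermediate nodes, with at most two children), each node created at most once per label. *)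

(* Defs.v *)
(* Model of the GLL-based graph parsing
   algorithm as a nondeterministic transition system whose states store
   the sets R, U, P, the GSS (nodes, edges) and the SPPF (symbol nodes,
   packed nodes). *)
From Stdlib Require Import List.
From mathcomp Require Import all_boot.

Set Implicit Arguments.
Unset Strict Implicit.
Unset Printing Implicit Defensive.

Section GLL.

Variables (Nt Tm : finType).

Definition sym := (Nt + Tm)%type.   (* inl = nonterminal, inr = terminal *)

Record grammar := Grammar { prods : seq (Nt * seq sym)%type; start : Nt }.

(* grammar slot  X -> alpha . beta *)
Record slot := Slot { lhs : Nt; bef : seq sym; aft : seq sym }.

Variable G : grammar.

Inductive nullable_seq : seq sym -> Prop :=
| ns_nil : nullable_seq [::]
| ns_cons A gam bet :
    (A, gam) \in prods G -> nullable_seq gam -> nullable_seq bet ->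
    nullable_seq (inl A :: bet).

Inductive first_seq : seq sym -> Tm -> Prop :=
| fs_term a bet : first_seq (inr a :: bet) a
| fs_nt A gam bet a :
    (A, gam) \in prods G -> first_seq gam a -> first_seq (inl A :: bet) a
| fs_skip A bet a :
    nullable_seq [:: inl A] -> first_seq bet a -> first_seq (inl A :: bet) a.

Inductive follow : Nt -> Tm -> Prop :=
| fo_first B alp A bet a :
    (B, alp ++ inl A :: bet) \in prods G -> first_seq bet a -> follow A a
| fo_up B alp A bet a :
    (B, alp ++ inl A :: bet) \in prods G -> nullable_seq bet ->
    follow B a -> follow A a.

(* LL(1) parse-table entry: the slot  x -> . gam  is in the entry (x, a) *)
Definition ll_entry (x : Nt) (a : Tm) (gam : seq sym) : Prop :=
  (x, gam) \in prods G /\ (first_seq gam a \/ (nullable_seq gam /\ follow x a)).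

Variables (V : finType) (E : {set (V * Tm * V)%type}) (Vs : {set V}).

(* SPPF symbol nodes, identified by their labels *)
Inductive snode :=
| STerm of V & Tm & V
| SEps of V
| SNT of V & Nt & V
| SInt of V & slot & V.

Definition ext (n : snode) : V * V :=
  match n with
  | STerm a _ b => (a, b) | SEps v => (v, v)
  | SNT a _ b => (a, b) | SInt a _ b => (a, b) end.

(* packed node (slot, pivot) under a parent, with its (at most two) children;
   [None] as left child / SPPF node denotes the dummy node $ *)
Record packed := Packed
  { pParent : snode; pSlot : slot; pPivot : V;
    pLeft : option snode; pRight : snode }.

Inductive gss := GRoot | GNode of slot & V.

(* descriptor labels: the initial label (code for the start nonterminal S)
   or a grammar slot *)
Inductive label := LStart | LSlot of slot.

Record desc := Desc { dL : label; dU : gss; dI : V; dW : option snode }.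

(* case in which getNodeP(X -> alpha . beta, w, z) simply returns z *)
Definition gnp_skip (L : slot) : Prop :=
  aft L <> [::] /\
  ((exists a, bef L = [:: inr a]) \/
   (exists A, bef L = [:: inl A] /\ ~ nullable_seq [:: inl A])).

Definition gnp_node (L : slot) (w : option snode) (z : snode) : snode :=
  let k := (ext z).1 in
  let i := (ext z).2 in
  let j := match w with Some w' => (ext w').1 | None => k end in
  match aft L with
  | [::] => SNT j (lhs L) i
  | _ => SInt j L i
  end.

Definition gnp_packed (L : slot) (w : option snode) (z : snode) : packed :=
  Packed (gnp_node L w z) L (ext z).1 w z.

Definition gnp_res (L : slot) (w : option snode) (z : snode) (y : snode) : Prop :=
  (gnp_skip L /\ y = z) \/ (~ gnp_skip L /\ y = gnp_node L w z).

Record state := State {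
  sR  : desc -> Prop;
  sU  : desc -> Prop;
  sP  : (gss * snode)%type -> Prop;
  sGN : gss -> Prop;
  sGE : (gss * option snode * gss)%type -> Prop;     (* GSS edges (v, label w, u) *)
  sSN : snode -> Prop;
  sSP : packed -> Prop
}.

(* elementary effects of processing one descriptor *)
Inductive effect :=
| EDesc of desc
| EPop of (gss * snode)%type
| EGN of gss
| EGE of (gss * option snode * gss)%type
| ESN of snode
| ESP of packed.

Definition gnp_eff (L : slot) (w : option snode) (z : snode) (e : effect) : Prop :=
  ~ gnp_skip L /\ (e = ESN (gnp_node L w z) \/ e = ESP (gnp_packed L w z)).

(* the SPPF node z popped at slot X -> alpha . (at vertex i, current node w);
   for alpha = eps it is getNodeP(X -> ., w, (i,eps,i)) *)
Definition pop_node (X : Nt) (alp : seq sym) (i : V) (w : option snode)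
  (z : snode) : Prop :=
  (alp = [::] /\ gnp_res (Slot X [::] [::]) w (SEps i) z) \/
  (alp <> [::] /\ w = Some z).

Inductive emits (s : state) : desc -> effect -> Prop :=
| em_start u i w gam a j :
    (i, a, j) \in E -> ll_entry (start G) a gam ->
    emits s (Desc LStart u i w) (EDesc (Desc (LSlot (Slot (start G) [::] gam)) u i None))
| em_term_node X alp a bet u i w j :
    (i, a, j) \in E ->
    emits s (Desc (LSlot (Slot X alp (inr a :: bet))) u i w) (ESN (STerm i a j))
| em_term_gnp X alp a bet u i w j e :
    (i, a, j) \in E ->
    gnp_eff (Slot X (rcons alp (inr a)) bet) w (STerm i a j) e ->
    emits s (Desc (LSlot (Slot X alp (inr a :: bet))) u i w) e
| em_term_desc X alp a bet u i w j y :
    (i, a, j) \in E ->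
    gnp_res (Slot X (rcons alp (inr a)) bet) w (STerm i a j) y ->
    emits s (Desc (LSlot (Slot X alp (inr a :: bet))) u i w)
      (EDesc (Desc (LSlot (Slot X (rcons alp (inr a)) bet)) u j (Some y)))
| em_nt_gn X alp A bet u i w :
    emits s (Desc (LSlot (Slot X alp (inl A :: bet))) u i w)
      (EGN (GNode (Slot X (rcons alp (inl A)) bet) i))
| em_nt_ge X alp A bet u i w :
    emits s (Desc (LSlot (Slot X alp (inl A :: bet))) u i w)
      (EGE (GNode (Slot X (rcons alp (inl A)) bet) i, w, u))
| em_nt_pgnp X alp A bet u i w z e :
    sP s (GNode (Slot X (rcons alp (inl A)) bet) i, z) ->
    gnp_eff (Slot X (rcons alp (inl A)) bet) w z e ->
    emits s (Desc (LSlot (Slot X alp (inl A :: bet))) u i w) e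
| em_nt_pdesc X alp A bet u i w z y :
    sP s (GNode (Slot X (rcons alp (inl A)) bet) i, z) ->
    gnp_res (Slot X (rcons alp (inl A)) bet) w z y ->
    emits s (Desc (LSlot (Slot X alp (inl A :: bet))) u i w)
      (EDesc (Desc (LSlot (Slot X (rcons alp (inl A)) bet)) u (ext z).2 (Some y)))
| em_nt_call X alp A bet u i w gam a j :
    (i, a, j) \in E -> ll_entry A a gam ->
    emits s (Desc (LSlot (Slot X alp (inl A :: bet))) u i w)
      (EDesc (Desc (LSlot (Slot A [::] gam))
                   (GNode (Slot X (rcons alp (inl A)) bet) i) i None))
| em_eps_node X u i w :
    emits s (Desc (LSlot (Slot X [::] [::])) u i w) (ESN (SEps i))
| em_eps_gnp X u i w e :
    gnp_eff (Slot X [::] [::]) w (SEps i) e ->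
    emits s (Desc (LSlot (Slot X [::] [::])) u i w) e
| em_pop_P X alp Lu j i w z :
    pop_node X alp i w z ->
    emits s (Desc (LSlot (Slot X alp [::])) (GNode Lu j) i w) (EPop (GNode Lu j, z))
| em_pop_gnp X alp Lu j i w z w' v e :
    pop_node X alp i w z ->
    sGE s (GNode Lu j, w', v) ->
    gnp_eff Lu w' z e ->
    emits s (Desc (LSlot (Slot X alp [::])) (GNode Lu j) i w) e
| em_pop_desc X alp Lu j i w z w' v y :
    pop_node X alp i w z ->
    sGE s (GNode Lu j, w', v) ->
    gnp_res Lu w' z y ->
    emits s (Desc (LSlot (Slot X alp [::])) (GNode Lu j) i w)
      (EDesc (Desc (LSlot Lu) v i (Some y))).

Definition process (s : state) (d : desc) : state :=
  State
    (fun x => (sR s x /\ x <> d) \/ (emits s d (EDesc x) /\ ~ sU s x))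
    (fun x => sU s x \/ emits s d (EDesc x))
    (fun x => sP s x \/ emits s d (EPop x))
    (fun x => sGN s x \/ emits s d (EGN x))
    (fun x => sGE s x \/ emits s d (EGE x))
    (fun x => sSN s x \/ emits s d (ESN x))
    (fun x => sSP s x \/ emits s d (ESP x)).

Definition init_state : state :=
  State
    (fun d => exists2 v, v \in Vs & d = Desc LStart GRoot v None)
    (fun d => exists2 v, v \in Vs & d = Desc LStart GRoot v None)
    (fun _ => False)
    (fun u => u = GRoot)
    (fun _ => False)
    (fun _ => False)
    (fun _ => False).

Definition step (s s' : state) : Prop := exists2 d, sR s d & s' = process s d.

Inductive reachable : state -> Prop :=
| reach_init : reachable init_state
| reach_step s s' : reachable s -> step s s' -> reachable s'.

(* the memory cells (each of size O(1), constants depending on G) *)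
Inductive cell :=
| CR of desc | CU of desc | CP of (gss * snode)%type | CGN of gss
| CGE of (gss * option snode * gss)%type | CSN of snode | CSP of packed.

Definition cells (s : state) (c : cell) : Prop :=
  match c with
  | CR d => sR s d | CU d => sU s d | CP p => sP s p | CGN u => sGN s u
  | CGE e => sGE s e | CSN n => sSN s n | CSP p => sSP s p
  end.

Definition card_le (T : Type) (A : T -> Prop) (n : nat) : Prop :=
  forall l : list T, NoDup l -> (forall x, In x l -> A x) -> (size l <= n)%N.

Definition space_le (s : state) (n : nat) : Prop := card_le (cells s) n.

End GLL.

(* Main.v *)
From Stdlib Require List.
Require Import Defs.
From mathcomp Require Import all_boot zify.

Set Implicit Arguments.
Unset Strict Implicit.
Unset Printing Implicit Defensive.

Lemma inIn (T : eqType) (x : T) s : x \in s -> List.In x s.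
Proof. elim: s => //= y s IH; rewrite in_cons => /orP [/eqP ->|/IH]; auto. Qed.

Lemma size_len (T : Type) (l : seq T) : size l = length l.
Proof. by elim: l => //= x l ->. Qed.

Lemma len_map (A B : Type) (f : A -> B) l : length (List.map f l) = length l.
Proof. by elim: l => //= x l ->. Qed.

Lemma len_app (A : Type) (l l' : list A) : length (List.app l l') = length l + length l'.
Proof. by elim: l => //= x l ->. Qed.

Lemma len_flat (A B : Type) (f : A -> list B) l k :
  (forall x, List.In x l -> length (f x) <= k) -> length (List.flat_map f l) <= length l * k.
Proof.
elim: l => //= x l IH H. rewrite len_app mulSn leq_add //.
- by apply: H; left.
- by apply: IH => y Hy; apply: H; right.
Qed.

Arguments GRoot {Nt Tm V}.
Arguments LStart {Nt Tm}.
Arguments SEps {Nt Tm V}.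
Arguments STerm {Nt Tm V}.
Arguments SNT {Nt Tm V}.
Arguments SInt {Nt Tm V}.

Section S.
Variables (Nt Tm : finType) (G : grammar Nt Tm) (V : finType)
  (E : {set (V * Tm * V)%type}) (Vs : {set V}).

Notation slotT := (slot Nt Tm).
Notation snodeT := (snode Nt Tm V).
Notation gssT := (gss Nt Tm V).
Notation descT := (desc Nt Tm V).

Definition validslot (L : slotT) : bool := (lhs L, bef L ++ aft L) \in prods G.

Definition labok (n : snodeT) : Prop :=
  match n with SInt _ L _ => validslot L | _ => True end.

Definition wstart (w : option snodeT) (i : V) : V :=
  match w with Some y => (ext y).1 | None => i end.

Definition wok (w : option snodeT) (i : V) : Prop :=
  match w with Some y => labok y /\ (ext y).2 = i | None => True end.

Definition uok (u : gssT) (w : option snodeT) (i : V) : Prop :=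
  match u with GRoot => True | GNode L j => validslot L /\ wstart w i = j end.

Definition DInv (d : descT) : Prop :=
  match dL d with
  | LStart => dU d = GRoot /\ dW d = None
  | LSlot L => [/\ validslot L, uok (dU d) (dW d) (dI d), wok (dW d) (dI d)
                 & (bef L = [::] -> dW d = None)]
  end.

Definition GNInv (u : gssT) : Prop :=
  match u with GRoot => True | GNode L _ => validslot L end.

Definition GEInv (e : (gssT * option snodeT * gssT)%type) : Prop :=
  let: (a, w, v) := e in
  match a with
  | GRoot => False
  | GNode L k => exists X alp A bet, L = Slot X (rcons alp (inl A)) bet /\
       DInv (Desc (LSlot (Slot X alp (inl A :: bet))) v k w)
  end.

Definition PInv (p : (gssT * snodeT)%type) : Prop :=
  let: (a, z) := p in
  match a with
  | GRoot => False
  | GNode L j => [/\ validslot L, (ext z).1 = j & labok z]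
  end.

Definition SPInv (p : packed Nt Tm V) : Prop :=
  exists L w z, [/\ p = gnp_packed L w z, validslot L, labok z & wok w (ext z).1].

Definition Inv (s : state Nt Tm V) : Prop :=
  (forall d, sR s d -> DInv d) /\ (forall d, sU s d -> DInv d) /\
      (forall p, sP s p -> PInv p) /\ (forall u, sGN s u -> GNInv u) /\
      (forall e, sGE s e -> GEInv e) /\ (forall n, sSN s n -> labok n) /\
      (forall p, sSP s p -> SPInv p).

Definition EffInv (e : effect Nt Tm V) : Prop :=
  match e with
  | EDesc d => DInv d | EPop p => PInv p | EGN u => GNInv u
  | EGE x => GEInv x | ESN n => labok n | ESP p => SPInv p end.

Lemma skip_bef L : gnp_skip G L -> exists x, bef L = [:: x].
Proof. by case=> _ [[a ->]|[A [-> _]]]; eauto. Qed.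

Lemma rcons1 (T : Type) (alp : seq T) x y : rcons alp x = [:: y] -> alp = [::].
Proof. by case: alp => // a [|b t]. Qed.

Lemma gnp_ext L w z y : (gnp_skip G L -> w = None) -> gnp_res G L w z y ->
  ext y = (wstart w (ext z).1, (ext z).2).
Proof.
move=> Hs [[sk ->]|[_ ->]]; first by rewrite (Hs sk) /=; case: (ext z).
by rewrite /gnp_node; case: (aft L) => [|? ?]; case: w {Hs}.
Qed.

Lemma gnp_lab L w z y : validslot L -> labok z -> gnp_res G L w z y -> labok y.
Proof.
move=> HL Hz [[_ ->]|[_ ->]] //.
by rewrite /gnp_node; case: (aft L).
Qed.

Lemma gnp_eff_ok L w z e : validslot L -> labok z -> wok w (ext z).1 ->
  gnp_eff G L w z e -> EffInv e.
Proof.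
move=> HL Hz Hw [_ [->|->]] /=.
- by rewrite /gnp_node; case: (aft L).
- by exists L, w, z.
Qed.

Lemma pop_ext X alp i w z : pop_node G X alp i w z -> wok w i ->
  ext z = (wstart w i, i) /\ labok z.
Proof.
case=> [[_ H]|[_ ->]] Hw.
- case: H => [[[Hne _] _]|[_ ->]]; first by case: Hne.
  by case: w {Hw}.
- case: Hw => Hl <- /=; split => //; by case: (ext z).
Qed.

Lemma valid_rcons X alp x bet :
  validslot (Slot X (rcons alp x) bet) = validslot (Slot X alp (x :: bet)).
Proof. by rewrite /validslot /= cat_rcons. Qed.

Lemma emits_ok s d e : Inv s -> DInv d -> emits G E s d e -> EffInv e.
Proof.
case=> IR [IU [IP [IGN [IGE [ISN ISP]]]]] Hd H; case: H Hd; rewrite /DInv /=.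
- move=> u i w gam a j _ [Hp _] [-> _]; by split.
- by [].
- move=> X alp a bet u i w j e0 _ Heff [Hv Hu Hw Hb].
  by apply: (gnp_eff_ok _ _ _ Heff); rewrite ?valid_rcons.
- move=> X alp a bet u i w j y _ Hres [Hv Hu Hw Hb].
  have Hs : gnp_skip G (Slot X (rcons alp (inr a)) bet) -> w = None.
    by move/skip_bef => [x Hx]; apply: Hb; exact: rcons1 Hx.
  have Hext := gnp_ext Hs Hres.
  split.
  + by rewrite valid_rcons.
  + by case: u Hu => //= L' j' [Hv' <-]; rewrite Hext.
  + split; last by rewrite Hext.
    by apply: (gnp_lab _ _ Hres); rewrite ?valid_rcons.
  + by move/(f_equal size); rewrite /= size_rcons.
- by move=> X alp A bet u i w [Hv _ _ _]; rewrite /= valid_rcons.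
- move=> X alp A bet u i w [Hv Hu Hw Hb]; exists X, alp, A, bet; split => //.
- move=> X alp A bet u i w z e0 HP Heff [Hv Hu Hw Hb].
  case: (IP _ HP) => _ Hz1 Hzl.
  by apply: (gnp_eff_ok _ Hzl _ Heff); rewrite ?valid_rcons ?Hz1.
- move=> X alp A bet u i w z y HP Hres [Hv Hu Hw Hb].
  case: (IP _ HP) => _ Hz1 Hzl.
  have Hs : gnp_skip G (Slot X (rcons alp (inl A)) bet) -> w = None.
    by move/skip_bef => [x Hx]; apply: Hb; exact: rcons1 Hx.
  have Hext := gnp_ext Hs Hres.
  rewrite Hz1 in Hext.
  split.
  + by rewrite valid_rcons.
  + by case: u Hu => //= L' j' [Hv' <-]; rewrite Hext.
  + split; last by rewrite Hext.
    by apply: (gnp_lab _ _ Hres); rewrite ?valid_rcons.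
  + by move/(f_equal size); rewrite /= size_rcons.
- move=> X alp A bet u i w gam a j _ [Hp _] [Hv Hu Hw Hb].
  by split => //=; rewrite valid_rcons.
- by [].
- move=> X u i w e0 Heff [Hv Hu Hw Hb].
  exact: (gnp_eff_ok _ _ _ Heff).
- move=> X alp Lu j i w z Hpop [Hv [HLu Hj] Hw Hb].
  case: (pop_ext Hpop Hw) => Hz Hzl.
  by split => //; rewrite Hz.
- move=> X alp Lu j i w z w' v e0 Hpop HGE Heff [Hv [HLu Hj] Hw Hb].
  case: (pop_ext Hpop Hw) => Hz Hzl.
  case: (IGE _ HGE) => X' [alp' [A [bet' [HL [Hv' Hu' Hw' Hb']]]]].
  apply: (gnp_eff_ok _ Hzl _ Heff); first by rewrite HL valid_rcons.
  by rewrite Hz /= Hj.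
- move=> X alp Lu j i w z w' v y Hpop HGE Hres [Hv [HLu Hj] Hw Hb].
  case: (pop_ext Hpop Hw) => Hz Hzl.
  case: (IGE _ HGE) => X' [alp' [A [bet' [HL [Hv' Hu' Hw' Hb']]]]].
  have Hs : gnp_skip G Lu -> w' = None.
    by rewrite HL; move/skip_bef => [x Hx]; apply: Hb'; exact: rcons1 Hx.
  have Hext := gnp_ext Hs Hres.
  rewrite Hz /= Hj in Hext.
  split.
  + by rewrite HL valid_rcons.
  + move: Hu'; case: v {HGE Hv' Hw' Hb'} => //= L' j' [Hv'' <-]; by rewrite Hext.
  + split; last by rewrite Hext.
    by apply: (gnp_lab _ _ Hres); rewrite ?HL ?valid_rcons.
  + by rewrite HL; move/(f_equal size); rewrite /= size_rcons.
Qed.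

Lemma Inv_init : Inv (init_state Nt Tm Vs).
Proof.
rewrite /Inv /=; split; first by move=> d [v _ ->].
split; first by move=> d [v _ ->].
split; first by [].
split; first by move=> u ->.
by split; [|split].
Qed.

Lemma Inv_process s d : Inv s -> sR s d -> Inv (process G E s d).
Proof.
move=> HI Hd; have Hdd : DInv d by case: HI => IR _; exact: IR.
have EO := fun e (H : emits G E s d e) => emits_ok HI Hdd H.
case: HI => IR [IU [IP [IGN [IGE [ISN ISP]]]]].
rewrite /Inv /=; split.
  by move=> x [[Hx _]|[Hx _]]; [exact: IR | exact: (EO _ Hx)].
split; first by move=> x [Hx|Hx]; [exact: IU | exact: (EO _ Hx)].
split; first by move=> x [Hx|Hx]; [exact: IP | exact: (EO _ Hx)].
split; first by move=> x [Hx|Hx]; [exact: IGN | exact: (EO _ Hx)].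
split; first by move=> x [Hx|Hx]; [exact: IGE | exact: (EO _ Hx)].
split; first by move=> x [Hx|Hx]; [exact: ISN | exact: (EO _ Hx)].
by move=> x [Hx|Hx]; [exact: ISP | exact: (EO _ Hx)].
Qed.

Lemma Inv_reach s : reachable G E Vs s -> Inv s.
Proof.
elim=> [|s1 s2 _ IH [d Hd ->]]; first exact: Inv_init.
exact: Inv_process.
Qed.

Definition slotsL : list slotT :=
  List.flat_map (fun p : Nt * seq (sym Nt Tm) =>
     List.map (fun k => Slot p.1 (take k p.2) (drop k p.2)) (iota 0 (size p.2).+1)) (prods G).

Lemma slotsL_ok L : validslot L -> List.In L slotsL.
Proof.
case: L => X a b; rewrite /validslot /= => H.
apply/List.in_flat_map; exists (X, a ++ b); split; first exact: inIn.
apply/List.in_map_iff; exists (size a); split.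
  by rewrite /= take_size_cat ?drop_size_cat.
by apply: inIn; rewrite mem_iota add0n ltnS size_cat leq_addr.
Qed.

Inductive nlab := NLT of Tm | NLE | NLN of Nt | NLI of slotT.

Definition lab (n : snodeT) : nlab :=
  match n with STerm _ a _ => NLT a | SEps _ => NLE | SNT _ X _ => NLN X | SInt _ L _ => NLI L end.
Definition mk_node (l : nlab) (k i : V) : snodeT :=
  match l with NLT a => STerm k a i | NLE => SEps k | NLN X => SNT k X i | NLI L => SInt k L i end.
Lemma mk_lab n : mk_node (lab n) (ext n).1 (ext n).2 = n.
Proof. by case: n. Qed.

Definition labL : list nlab :=
  List.app (List.map NLT (enum Tm)) (NLE :: List.app (List.map NLN (enum Nt)) (List.map NLI slotsL)).

Lemma labL_ok n : labok n -> List.In (lab n) labL.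
Proof.
case: n => [k a i|k|k X i|k L i] /= H; apply/List.in_app_iff.
- by left; apply: List.in_map; apply: inIn; rewrite mem_enum.
- by right; left.
- by right; right; apply/List.in_app_iff; left; apply: List.in_map; apply: inIn; rewrite mem_enum.
- by right; right; apply/List.in_app_iff; right; apply: List.in_map; apply: slotsL_ok.
Qed.

Definition VL : list V := enum V.
Lemma VL_ok v : List.In v VL.
Proof. by apply: inIn; rewrite mem_enum. Qed.

Definition nodesAt (i : V) : list snodeT :=
  List.flat_map (fun l => List.map (fun k => mk_node l k i) VL) labL.
Lemma nodesAt_ok n : labok n -> List.In n (nodesAt (ext n).2).
Proof.
move=> H; apply/List.in_flat_map; exists (lab n); split; first exact: labL_ok.
rewrite -{1}(mk_lab n); apply: List.in_map; exact: VL_ok.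
Qed.

Definition optAt (i : V) : list (option snodeT) := None :: List.map Some (nodesAt i).
Lemma optAt_ok w i : wok w i -> List.In w (optAt i).
Proof.
case: w => [y [Hl <-]|_] /=; last by left.
by right; apply: List.in_map; apply: nodesAt_ok.
Qed.

Definition nodeU : list snodeT := List.flat_map nodesAt VL.
Lemma nodeU_ok n : labok n -> List.In n nodeU.
Proof. move=> H; apply/List.in_flat_map; exists (ext n).2; split; [exact: VL_ok | exact: nodesAt_ok]. Qed.

Definition gssL : list gssT := GRoot :: List.flat_map (fun L => List.map (GNode L) VL) slotsL.
Lemma gssL_ok u : GNInv u -> List.In u gssL.
Proof.
case: u => [|L j] /= H; first by left.
right; apply/List.in_flat_map; exists L; split; first exact: slotsL_ok.
apply: List.in_map; exact: VL_ok.
Qed.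
Lemma uok_GN u w i : uok u w i -> GNInv u.
Proof. by case: u => //= L j []. Qed.

Definition descU : list descT :=
  List.app (List.map (fun v => Desc LStart GRoot v None) VL)
    (List.flat_map (fun L => List.flat_map (fun u => List.flat_map (fun i =>
        List.map (Desc (LSlot L) u i) (optAt i)) VL) gssL) slotsL).
Lemma descU_ok d : DInv d -> List.In d descU.
Proof.
case: d => [[|L] u i w] /=; rewrite /DInv /=.
  by case=> -> ->; apply/List.in_app_iff; left; apply: (List.in_map (fun v => Desc LStart GRoot v None)); exact: VL_ok.
case=> Hv Hu Hw _; apply/List.in_app_iff; right.
apply/List.in_flat_map; exists L; split; first exact: slotsL_ok.
apply/List.in_flat_map; exists u; split; first exact: (gssL_ok (uok_GN Hu)).
apply/List.in_flat_map; exists i; split; first exact: VL_ok.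
apply: List.in_map; exact: optAt_ok.
Qed.

Definition PU : list (gssT * snodeT) :=
  List.flat_map (fun L => List.flat_map (fun j => List.map (fun z => (GNode L j, z)) nodeU) VL) slotsL.
Lemma PU_ok p : PInv p -> List.In p PU.
Proof.
case: p => [[|L j] z] //= [Hv _ Hz].
apply/List.in_flat_map; exists L; split; first exact: slotsL_ok.
apply/List.in_flat_map; exists j; split; first exact: VL_ok.
apply: (List.in_map (fun z => (GNode L j, z))); exact: nodeU_ok.
Qed.

Definition geU : list (gssT * option snodeT * gssT) :=
  List.flat_map (fun L => List.flat_map (fun k => List.flat_map (fun w =>
     List.map (fun v => (GNode L k, w, v)) gssL) (optAt k)) VL) slotsL.
Lemma geU_ok e : GEInv e -> List.In e geU.
Proof.
case: e => [[[|L k] w] v] //= [X [alp [A [bet [-> [Hv Hu Hw _]]]]]].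
apply/List.in_flat_map; exists (Slot X (rcons alp (inl A)) bet); split.
  by apply: slotsL_ok; rewrite valid_rcons.
apply/List.in_flat_map; exists k; split; first exact: VL_ok.
apply/List.in_flat_map; exists w; split; first exact: optAt_ok.
apply: (List.in_map (fun v => (GNode _ k, w, v))); exact: (gssL_ok (uok_GN Hu)).
Qed.

Definition packU : list (packed Nt Tm V) :=
  List.flat_map (fun L => List.flat_map (fun z =>
     List.map (fun w => gnp_packed L w z) (optAt (ext z).1)) nodeU) slotsL.
Lemma packU_ok p : SPInv p -> List.In p packU.
Proof.
case=> L [w [z [-> Hv Hz Hw]]].
apply/List.in_flat_map; exists L; split; first exact: slotsL_ok.
apply/List.in_flat_map; exists z; split; first exact: nodeU_ok.
apply: (List.in_map (fun w => gnp_packed L w z)); exact: optAt_ok.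
Qed.

Definition cellU : list (cell Nt Tm V) :=
  List.app (List.map (@CR _ _ _) descU) (List.app (List.map (@CU _ _ _) descU)
  (List.app (List.map (@CP _ _ _) PU) (List.app (List.map (@CGN _ _ _) gssL)
  (List.app (List.map (@CGE _ _ _) geU) (List.app (List.map (@CSN _ _ _) nodeU)
  (List.map (@CSP _ _ _) packU)))))).

Lemma cellU_ok s c : Inv s -> cells s c -> List.In c cellU.
Proof.
case=> IR [IU [IP [IGN [IGE [ISN ISP]]]]].
rewrite /cellU; case: c => x Hx; rewrite !List.in_app_iff.
- by left; apply: List.in_map; apply: descU_ok; apply: IR.
- by right; left; apply: List.in_map; apply: descU_ok; apply: IU.
- by do 2 right; left; apply: List.in_map; apply: PU_ok; apply: IP.
- by do 3 right; left; apply: List.in_map; apply: gssL_ok; apply: IGN.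
- by do 4 right; left; apply: List.in_map; apply: geU_ok; apply: IGE.
- by do 5 right; left; apply: List.in_map; apply: nodeU_ok; apply: ISN.
- by do 6 right; apply: List.in_map; apply: packU_ok; apply: ISP.
Qed.

Lemma len_flat' (A B : Type) (f : A -> list B) l p k : length l <= p ->
  (forall x, List.In x l -> length (f x) <= k) -> length (List.flat_map f l) <= p * k.
Proof. move=> Hl H; apply: leq_trans (len_flat H) _; exact: leq_mul. Qed.

Notation a := (length slotsL).
Notation b := (length labL).
Notation n := #|V|.

Lemma len_VL : length VL = n.
Proof. by rewrite cardE size_len. Qed.

Lemma len_nodesAt i : length (nodesAt i) <= b * n.
Proof. apply: len_flat' => // l _; by rewrite len_map len_VL. Qed.

Lemma len_optAt i : length (optAt i) <= 1 + b * n.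
Proof. by rewrite /= len_map; have := len_nodesAt i. Qed.

Lemma len_nodeU : length nodeU <= n * (b * n).
Proof. apply: len_flat'; [by rewrite len_VL | move=> i _; exact: len_nodesAt]. Qed.

Lemma len_gssL : length gssL <= 1 + a * n.
Proof.
rewrite /= ltnS; apply: len_flat' => // L _; by rewrite len_map len_VL.
Qed.

Lemma len_descU : length descU <= n + a * ((1 + a * n) * (n * (1 + b * n))).
Proof.
rewrite len_app len_map len_VL leq_add2l.
apply: len_flat' => // L _; apply: len_flat'; first exact: len_gssL.
move=> u _; apply: len_flat'; first by rewrite len_VL.
move=> i _; rewrite len_map; exact: len_optAt.
Qed.

Lemma len_PU : length PU <= a * (n * (n * (b * n))).
Proof.
apply: len_flat' => // L _; apply: len_flat'; first by rewrite len_VL.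
move=> j _; rewrite len_map; exact: len_nodeU.
Qed.

Lemma len_geU : length geU <= a * (n * ((1 + b * n) * (1 + a * n))).
Proof.
apply: len_flat' => // L _; apply: len_flat'; first by rewrite len_VL.
move=> k _; apply: len_flat'; first exact: len_optAt.
move=> w _; rewrite len_map; exact: len_gssL.
Qed.

Lemma len_packU : length packU <= a * ((n * (b * n)) * (1 + b * n)).
Proof.
apply: len_flat' => // L _; apply: len_flat'; first exact: len_nodeU.
move=> z _; rewrite len_map; exact: len_optAt.
Qed.

Definition KK := (a + 1) * (b + 1).

Lemma len_cellU : length cellU <= 14 * (KK * KK * KK * (n.+1 * n.+1 * n.+1)).
Proof.
set K := KK; set m := n.+1.
have HK : 0 < K by rewrite /K /KK muln_gt0 !addn1.
have Hm : 0 < m by [].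
have ha : a <= K by rewrite /K /KK; apply: (leq_trans (leq_addr 1 a)); rewrite leq_pmulr // addn1.
have hb : b <= K by rewrite /K /KK; apply: (leq_trans (leq_addr 1 b)); rewrite leq_pmull // addn1.
have hn : n <= m by [].
have han : 1 + a * n <= K * m.
  rewrite /K /KK /m; apply: (@leq_trans ((a + 1) * n.+1)); first lia.
  by apply: leq_mul (leqnn _); rewrite leq_pmulr // addn1.
have hbn : 1 + b * n <= K * m.
  rewrite /K /KK /m; apply: (@leq_trans ((b + 1) * n.+1)); first lia.
  by apply: leq_mul (leqnn _); rewrite leq_pmull // addn1.
have hbn' : b * n <= K * m by apply: leq_trans hbn; rewrite add1n.
have D := leq_trans len_descU (leq_add hn (leq_mul ha (leq_mul han (leq_mul hn hbn)))).
have P := leq_trans len_PU (leq_mul ha (leq_mul hn (leq_mul hn hbn'))).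
have Gs := leq_trans len_gssL han.
have GE := leq_trans len_geU (leq_mul ha (leq_mul hn (leq_mul hbn han))).
have N := leq_trans len_nodeU (leq_mul hn hbn').
have PK := leq_trans len_packU (leq_mul ha (leq_mul (leq_mul hn hbn') hbn)).
have f1 : m <= K * K * K * (m * m * m).
  have pos : 0 < K * K * K * (m * m) by rewrite /m !muln_gt0 !addn1.
  by have := leq_pmulr m pos; lia.
have f2 : K * m <= K * K * K * (m * m * m).
  have pos : 0 < K * K * (m * m) by rewrite /m !muln_gt0 !addn1.
  by have := leq_pmulr (K * m) pos; lia.
have f3 : K * (m * m) <= K * K * K * (m * m * m).
  have pos : 0 < K * K * m by rewrite /m !muln_gt0 !addn1.
  by have := leq_pmulr (K * (m * m)) pos; lia.
have f4 : K * K * (m * m * m) <= K * K * K * (m * m * m).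
  by have := leq_pmulr (K * K * (m * m * m)) HK; lia.
rewrite /cellU !len_app !len_map.
lia.
Qed.

End S.

Lemma cube_bound (n : nat) : n.+1 * n.+1 * n.+1 <= 8 * (n ^ 3 + 1).
Proof.
rewrite !expnS expn0 muln1.
case: n => [|k] //.
have h1 : k.+1 <= k.+1 * k.+1 by rewrite leq_pmulr.
have h2 : k.+1 * k.+1 <= k.+1 * (k.+1 * k.+1) by rewrite leq_pmull.
lia.
Qed.

Theorem theorem3 (Nt Tm : finType) (G : grammar Nt Tm) :
  exists C : nat,
    forall (V : finType) (E : {set (V * Tm * V)%type}) (Vs Vf : {set V})
           (s : state Nt Tm V),
      reachable G E Vs s ->
      space_le s (C * (#|V| ^ 3 + #|E| + 1)).
Proof.
set K := KK G.
exists (112 * (K * K * K)) => V E Vs Vf s Hr l Hnd Hin.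
have HI := Inv_reach Hr.
have Hinc : List.incl l (cellU G V) by move=> c Hc; exact: (cellU_ok HI (Hin c Hc)).
have /leP H1 := List.NoDup_incl_length Hnd Hinc.
rewrite size_len.
have H2 := len_cellU G V.
have H3 := leq_mul (leqnn (14 * (K * K * K))) (cube_bound #|V|).
have H4 : #|V| ^ 3 + 1 <= #|V| ^ 3 + #|E| + 1 by lia.
have H5 := leq_mul (leqnn (112 * (K * K * K))) H4.
rewrite -/K in H2.
lia.
Qed.
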